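(* (a) Over QHC, Hilbert's No Ignorabimus Principle is equivalent to the schema $\nabla\alpha\leftrightarrow\neg\neg\alpha$ (for all problems $\alpha$): adding either schema to QHC as new axioms makes all instances of the other derivable. (b) Over QHC, Kolmogorov's Stability Principle implies the schema $\nabla\alpha\leftrightarrow\neg\neg\alpha$ (for all problems $\alpha$).
   Context: QHC is a two-sorted first-order calculus. Its only terms are individual variables. Every formula is either a problem (denoted by Greek letters $\alpha,\beta,\gamma,\dots$) or a proposition (denoted by Latin letters $p,q,\dots$). Atomic formulas are proposition variables $p(t_1,\dots,t_n)$ (of proposition type), problem variables $\pi(t_1,\dots,t_n)$ (of problem type), and the constants $0$ (a proposition, classical falsity) and $\bot$ (a problem, intuitionistic absurdity). Propositions are closed under the classical connectives $\land,\lor,\to$ and quantifiers $\exists,\forall$; problems are closed under the intuitionistic connectives $\land,\lor,\to$ and quantifiers $\exists,\forall$ (the same symbols are used, distinguished by the type of the arguments). $\neg p$ abbreviates $p\to 0$, $\neg\alpha$ abbreviates $\alpha\to\bot$, and $\leftrightarrow$ is defined as usual. There are two type-conversion operators: if $p$ is a proposition then $!p$ is a problem, and if $\alpha$ is a problem then $?\alpha$ is a proposition. Deductive system of QHC: all axioms and rules of classical predicate logic applied to all propositions; all postulates and rules of intuitionistic predicate logic applied to all problems; the rules $p\,/\,!p$ and $\alpha\,/\,?\alpha$; and the schemas $?!p\to p$; $\alpha\to\, !?\alpha$; $!(p\to q)\to(!p\to !q)$; $?(\alpha\to\beta)\to(?\alpha\to ?\beta)$; $!0\to\bot$; $?(\alpha\land\beta)\leftrightarrow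 ?\alpha\land ?\beta$; $?(\alpha\lor\beta)\leftrightarrow ?\alpha\lor ?\beta$; $?\bot\to 0$; $?\exists x\,\alpha(x)\leftrightarrow\exists x\,?\alpha(x)$; $?\forall x\,\alpha(x)\to\forall x\,?\alpha(x)$ (usual variable side conditions implicit). $\vdash A$ means $A$ is derivable in QHC; $A\Rightarrow B$ means $\vdash A\to B$ and $A\Leftrightarrow B$ means $\vdash A\leftrightarrow B$ (with $A,B$ of the same type); $A\vdash B$ means $B$ is derivable in QHC from the premise $A$. Notation: $\Box p := ?!p$ (a proposition) and $\nabla\alpha := !?\alpha$ (a problem). QC and QH denote classical and intuitionistic predicate calculus. Hilbert's No Ignorabimus Principle is the schema $?(\gamma\lor\neg\gamma)$ for all problems $\gamma$. Kolmogorov's Stability Principle is the schema $\neg !\neg p\to !p$ for all propositions $p$. *)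

(* Defs.v *)
(* Deep embedding of the two-sorted calculus QHC.
   Individual variables are de Bruijn indices (the only terms). *)
From Stdlib Require Import List.

(* Propositions (classical sort) and problems (intuitionistic sort). *)
Inductive prop : Type :=
| pvar  : nat -> list nat -> prop      (* proposition variable p(t1,...,tn) *)
| pzero : prop
| pand  : prop -> prop -> prop
| por   : prop -> prop -> prop
| pimp  : prop -> prop -> prop
| pex   : prop -> prop                 (* binds de Bruijn index 0 *)
| pall  : prop -> prop                 (* binds de Bruijn index 0 *)
| pq    : prob -> prop                 (* ?alpha *)
with prob : Type :=
| avar  : nat -> list nat -> prob      (* problem variable pi(t1,...,tn) *)
| abot  : prob
| aand  : prob -> prob -> prob
| aor   : prob -> prob -> prob
| aimp  : prob -> prob -> prob
| aex   : prob -> prob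
| aall  : prob -> prob
| abang : prop -> prob.                (* !p *)

Definition pneg (p : prop) : prop := pimp p pzero.
Definition aneg (a : prob) : prob := aimp a abot.
Definition piff (p q : prop) : prop := pand (pimp p q) (pimp q p).
Definition aiff (a b : prob) : prob := aand (aimp a b) (aimp b a).

Definition up (f : nat -> nat) : nat -> nat :=
  fun k => match k with 0 => 0 | S k => S (f k) end.

Fixpoint ren_p (f : nat -> nat) (p : prop) : prop :=
  match p with
  | pvar n ts => pvar n (map f ts)
  | pzero => pzero
  | pand p q => pand (ren_p f p) (ren_p f q)
  | por p q => por (ren_p f p) (ren_p f q)
  | pimp p q => pimp (ren_p f p) (ren_p f q)
  | pex p => pex (ren_p (up f) p)
  | pall p => pall (ren_p (up f) p)
  | pq a => pq (ren_a f a)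
  end
with ren_a (f : nat -> nat) (a : prob) : prob :=
  match a with
  | avar n ts => avar n (map f ts)
  | abot => abot
  | aand a b => aand (ren_a f a) (ren_a f b)
  | aor a b => aor (ren_a f a) (ren_a f b)
  | aimp a b => aimp (ren_a f a) (ren_a f b)
  | aex a => aex (ren_a (up f) a)
  | aall a => aall (ren_a (up f) a)
  | abang p => abang (ren_p f p)
  end.

(* substitution of the variable t for the bound index 0 *)
Definition inst (t : nat) : nat -> nat :=
  fun k => match k with 0 => t | S k => k end.

Inductive form : Type :=
| FP : prop -> form
| FA : prob -> form.

Inductive Der (Ax : form -> Prop) : form -> Prop :=
| d_ax f : Ax f -> Der Ax f
| cK p q : Der Ax (FP (pimp p (pimp q p)))
| cS p q r : Der Ax (FP (pimp (pimp p (pimp q r)) (pimp (pimp p q) (pimp p r))))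
| cAndI p q : Der Ax (FP (pimp p (pimp q (pand p q))))
| cAndE1 p q : Der Ax (FP (pimp (pand p q) p))
| cAndE2 p q : Der Ax (FP (pimp (pand p q) q))
| cOrI1 p q : Der Ax (FP (pimp p (por p q)))
| cOrI2 p q : Der Ax (FP (pimp q (por p q)))
| cOrE p q r : Der Ax (FP (pimp (pimp p r) (pimp (pimp q r) (pimp (por p q) r))))
| cEFQ p : Der Ax (FP (pimp pzero p))
| cDNE p : Der Ax (FP (pimp (pneg (pneg p)) p))
| cAllE p t : Der Ax (FP (pimp (pall p) (ren_p (inst t) p)))
| cAllI p q : Der Ax (FP (pimp (pall (pimp (ren_p S q) p)) (pimp q (pall p))))
| cExI p t : Der Ax (FP (pimp (ren_p (inst t) p) (pex p)))
| cExE p q : Der Ax (FP (pimp (pall (pimp p (ren_p S q))) (pimp (pex p) q)))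
| cMP p q : Der Ax (FP (pimp p q)) -> Der Ax (FP p) -> Der Ax (FP q)
| cGen p : Der Ax (FP p) -> Der Ax (FP (pall p))
| iK a b : Der Ax (FA (aimp a (aimp b a)))
| iS a b c : Der Ax (FA (aimp (aimp a (aimp b c)) (aimp (aimp a b) (aimp a c))))
| iAndI a b : Der Ax (FA (aimp a (aimp b (aand a b))))
| iAndE1 a b : Der Ax (FA (aimp (aand a b) a))
| iAndE2 a b : Der Ax (FA (aimp (aand a b) b))
| iOrI1 a b : Der Ax (FA (aimp a (aor a b)))
| iOrI2 a b : Der Ax (FA (aimp b (aor a b)))
| iOrE a b c : Der Ax (FA (aimp (aimp a c) (aimp (aimp b c) (aimp (aor a b) c))))
| iEFQ a : Der Ax (FA (aimp abot a))
| iAllE a t : Der Ax (FA (aimp (aall a) (ren_a (inst t) a)))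
| iAllI a b : Der Ax (FA (aimp (aall (aimp (ren_a S b) a)) (aimp b (aall a))))
| iExI a t : Der Ax (FA (aimp (ren_a (inst t) a) (aex a)))
| iExE a b : Der Ax (FA (aimp (aall (aimp a (ren_a S b))) (aimp (aex a) b)))
| iMP a b : Der Ax (FA (aimp a b)) -> Der Ax (FA a) -> Der Ax (FA b)
| iGen a : Der Ax (FA a) -> Der Ax (FA (aall a))
| rBang p : Der Ax (FP p) -> Der Ax (FA (abang p))
| rQ a : Der Ax (FA a) -> Der Ax (FP (pq a))
| x1 p : Der Ax (FP (pimp (pq (abang p)) p))
| x2 a : Der Ax (FA (aimp a (abang (pq a))))
| x3 p q : Der Ax (FA (aimp (abang (pimp p q)) (aimp (abang p) (abang q))))
| x4 a b : Der Ax (FP (pimp (pq (aimp a b)) (pimp (pq a) (pq b))))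
| x5 : Der Ax (FA (aimp (abang pzero) abot))
| x6 a b : Der Ax (FP (piff (pq (aand a b)) (pand (pq a) (pq b))))
| x7 a b : Der Ax (FP (piff (pq (aor a b)) (por (pq a) (pq b))))
| x8 : Der Ax (FP (pimp (pq abot) pzero))
| x9 a : Der Ax (FP (piff (pq (aex a)) (pex (pq a))))
| x10 a : Der Ax (FP (pimp (pq (aall a)) (pall (pq a)))).

Definition nabla (a : prob) : prob := abang (pq a).

(* The schemas, as sets of all their instances. *)
Definition NoIgnorabimus : form -> Prop :=
  fun f => exists g : prob, f = FP (pq (aor g (aneg g))).
Definition NablaNegNeg : form -> Prop :=
  fun f => exists a : prob, f = FA (aiff (nabla a) (aneg (aneg a))).
Definition KolmogorovStability : form -> Prop :=
  fun f => exists p : prop, f = FA (aimp (aneg (abang (pneg p))) (abang p)).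

(* Main.v *)
Require Import Defs.
From Stdlib Require Import List.
Import ListNotations.

Section Hilb.
Variable T : Type.
Variable imp : T -> T -> T.
Variable D : T -> Prop.
Hypothesis HK : forall a b, D (imp a (imp b a)).
Hypothesis HS : forall a b c, D (imp (imp a (imp b c)) (imp (imp a b) (imp a c))).
Hypothesis HMP : forall a b, D (imp a b) -> D a -> D b.

Fixpoint imps (G : list T) (b : T) : T :=
  match G with nil => b | c :: G => imp c (imps G b) end.

Lemma hI a : D (imp a a).
Proof. exact (HMP _ _ (HMP _ _ (HS a (imp a a) a) (HK a (imp a a))) (HK a a)). Qed.

Lemma hcomp a b c : D (imp a b) -> D (imp b c) -> D (imp a c).
Proof. intros H1 H2. exact (HMP _ _ (HMP _ _ (HS a b c) (HMP _ _ (HK _ a) H2)) H1). Qed.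

Lemma hlift G b : D b -> D (imps G b).
Proof. induction G; simpl; auto. intro H. exact (HMP _ _ (HK _ _) (IHG H)). Qed.

Lemma happT G a b : D (imp (imps G (imp a b)) (imp (imps G a) (imps G b))).
Proof.
  induction G as [|c G IH]; simpl. apply hI.
  eapply hcomp. exact (HMP _ _ (HS _ _ _) (HMP _ _ (HK _ c) IH)). apply HS.
Qed.

Lemma happ G a b : D (imps G (imp a b)) -> D (imps G a) -> D (imps G b).
Proof. intros H1 H2. exact (HMP _ _ (HMP _ _ (happT G a b) H1) H2). Qed.

Lemma hwk G a : D (imp a (imps G a)).
Proof. induction G; simpl. apply hI. eapply hcomp. exact IHG. apply HK. Qed.

Lemma hhyp G a : In a G -> D (imps G a).
Proof.
  induction G as [|c G IH]; simpl. tauto.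
  intros [->|H]. apply hwk. exact (HMP _ _ (HK _ _) (IH H)).
Qed.

Lemma himps_app G a b : imps (G ++ [a]) b = imps G (imp a b).
Proof. induction G; simpl; congruence. Qed.

Lemma hintro G a b : D (imps (G ++ [a]) b) -> D (imps G (imp a b)).
Proof. rewrite himps_app; auto. Qed.
End Hilb.

Arguments imps {T} imp G b.

Section Q.
Variable Ax : form -> Prop.
Definition DA a := Der Ax (FA a).
Definition DP p := Der Ax (FP p).

Definition aI G a b := happ prob aimp DA (iK Ax) (iS Ax) (iMP Ax) G a b.
Definition pI G a b := happ prop pimp DP (cK Ax) (cS Ax) (cMP Ax) G a b.
Definition aL G b := hlift prob aimp DA (iK Ax) (iMP Ax) G b.
Definition pL G b := hlift prop pimp DP (cK Ax) (cMP Ax) G b.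
Definition aH G a := hhyp prob aimp DA (iK Ax) (iS Ax) (iMP Ax) G a.
Definition pH G a := hhyp prop pimp DP (cK Ax) (cS Ax) (cMP Ax) G a.
Definition acomp a b c := hcomp prob aimp DA (iK Ax) (iS Ax) (iMP Ax) a b c.

Lemma Qmono a b : DA (aimp a b) -> DP (pimp (pq a) (pq b)).
Proof. intro H. exact (cMP _ _ _ (x4 _ a b) (rQ _ _ H)). Qed.
Lemma Bmono p q : DP (pimp p q) -> DA (aimp (abang p) (abang q)).
Proof. intro H. exact (iMP _ _ _ (x3 _ p q) (rBang _ _ H)). Qed.
Lemma Bmono2 p q r : DP (pimp p (pimp q r)) ->
  DA (aimp (abang p) (aimp (abang q) (abang r))).
Proof. intro H. eapply acomp. apply Bmono. exact H. apply x3. Qed.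

Lemma qneg a : DP (pimp (pq (aneg a)) (pneg (pq a))).
Proof.
  change (DP (imps pimp [pq (aneg a); pq a] pzero)).
  eapply pI. apply pL. apply x8.
  eapply pI. eapply pI. apply pL. apply (x4 _ a abot).
  apply pH; simpl; auto. apply pH; simpl; auto.
Qed.

Lemma nab_nn a : DA (aimp (nabla a) (aneg (aneg a))).
Proof.
  assert (H : DP (pimp (pq a) (pimp (pq (aneg a)) pzero))).
  { change (DP (imps pimp [pq a; pq (aneg a)] pzero)).
    eapply pI. eapply pI. apply pL. apply qneg. apply pH; simpl; auto.
    apply pH; simpl; auto. }
  apply Bmono2 in H.
  change (DA (imps aimp [nabla a; aneg a] abot)).
  eapply aI. apply aL. apply x5.
  eapply aI. eapply aI. apply aL. exact H. apply aH; simpl; auto.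
  eapply aI. apply aL. apply x2. apply aH; simpl; auto.
Qed.

Lemma mk_iff a b : DA (aimp a b) -> DA (aimp b a) -> DA (aiff a b).
Proof. intros H1 H2. exact (iMP _ _ _ (iMP _ _ _ (iAndI _ _ _) H1) H2). Qed.
End Q.

Ltac hyp := first [apply aH | apply pH]; simpl; repeat (first [left; reflexivity | right]).

Lemma a1 a : Der NoIgnorabimus (FA (aimp (aneg (aneg a)) (nabla a))).
Proof.
  set (Ax := NoIgnorabimus).
  assert (Hor : DP Ax (por (pq a) (pq (aneg a)))).
  { eapply cMP. eapply cMP. apply cAndE1. apply (x7 _ a (aneg a)).
    apply d_ax. exists a. reflexivity. }
  assert (H : DP Ax (pimp (pq (aneg (aneg a))) (pq a))).
  { change (DP Ax (imps pimp [pq (aneg (aneg a))] (pq a))).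
    eapply pI. apply pL. apply cDNE.
    apply (hintro _ _ (DP Ax)). simpl app.
    eapply pI. eapply pI. eapply pI. apply pL. apply (cOrE _ (pq a) (pq (aneg a)) pzero).
    hyp.
    eapply pI. apply pL. apply qneg. hyp.
    apply pL. exact Hor. }
  apply Bmono in H.
  eapply acomp. apply x2. exact H.
Qed.

Lemma a2 g : Der NablaNegNeg (FP (pq (aor g (aneg g)))).
Proof.
  set (Ax := NablaNegNeg).
  assert (H1 : DA Ax (aimp (aneg (aneg (aor g (aneg g)))) (nabla (aor g (aneg g))))).
  { eapply iMP. apply iAndE2. apply d_ax. eexists. reflexivity. }
  assert (H2 : DA Ax (aneg (aneg (aor g (aneg g))))).
  { change (DA Ax (imps aimp [aneg (aor g (aneg g))] abot)).
    eapply aI. hyp.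
    eapply aI. apply aL. apply iOrI2.
    apply (hintro _ _ (DA Ax)). simpl app.
    eapply aI. hyp.
    eapply aI. apply aL. apply iOrI1. hyp. }
  eapply cMP. apply x1. apply rQ. exact (iMP _ _ _ H1 H2).
Qed.

Lemma b1 a : Der KolmogorovStability (FA (aimp (aneg (aneg a)) (nabla a))).
Proof.
  set (Ax := KolmogorovStability).
  assert (HK : DA Ax (aimp (aneg (abang (pneg (pq a)))) (abang (pq a)))).
  { apply d_ax. exists (pq a). reflexivity. }
  assert (H : DP Ax (pimp (pq a) (pimp (pneg (pq a)) pzero))).
  { change (DP Ax (imps pimp [pq a; pneg (pq a)] pzero)).
    eapply pI. hyp. hyp. }
  apply Bmono2 in H.
  eapply acomp. 2: exact HK.
  change (DA Ax (imps aimp [aneg (aneg a); abang (pneg (pq a))] abot)).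
  eapply aI. hyp.
  apply (hintro _ _ (DA Ax)). simpl app.
  eapply aI. apply aL. apply x5.
  eapply aI. eapply aI. apply aL. exact H.
  eapply aI. apply aL. apply x2. hyp.
  hyp.
Qed.

Theorem proposition2p27 :
  ((forall a : prob, Der NoIgnorabimus (FA (aiff (nabla a) (aneg (aneg a))))) /\
   (forall g : prob, Der NablaNegNeg (FP (pq (aor g (aneg g)))))) /\
  (forall a : prob, Der KolmogorovStability (FA (aiff (nabla a) (aneg (aneg a))))).
Proof.
  split; [split|]; intros.
  - apply mk_iff. apply nab_nn. apply a1.
  - apply a2.
  - apply mk_iff. apply nab_nn. apply b1.
Qed.
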